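(* Let $(H,T)$ be a coupling time with ambiguities of finite width for the interacting particle system described in the context, and assume that $\Lambda_T(\lambda)=\mathbb{E}[e^{-\lambda T}]$ is finite for some $\lambda>0$. Then $\Lambda_H(\lambda')$ is finite for every $\lambda'<\lambda$.
   Context: Let $S$ be a finite set and $\mathfrak{J}$ a finite index set; for each $i\in\mathfrak{J}$ fix a finite $A_i\subset\mathbb{Z}$, $\ell_i\subset S^{A_i}$, $s_i\in S$, $r_i\ge0$. Graphical construction: on $(\Omega,\mathcal{F},\mathbb{P})$, independent Poisson processes $\Psi(x,i)$ on $(-\infty,0)$ with rates $r_i$, points $0>\Psi(x,i,1)>\Psi(x,i,2)>\cdots$; $\mathcal{F}(x,i)=\sigma(\Psi(x,i))$. Starting from $\xi\in S^{\mathbb{Z}}$ at time $u<0$, at each point $t=\Psi(x,i,k)>u$, if the configuration just before $t$ restricted to $x+A_i$ lies in $\ell_i$ (always if $A_i=\emptyset$), site $x$ is set to $s_i$ (the point is ''performed''). $\Phi(\xi,u,0^-,0)$ is the state of site $0$ just before time $0$; $\mathrm{Perf}(\xi,u,x,i,k)$ indicates whether $\Psi(x,i,k)$ is performed. For a random time $U\le0$, $\mathcal{F}^+(U)$ is generated by the numbers of points of each $\Psi(x,i)$ in $[U,0)$ and their positions. A coupling time with ambiguities is a pair $(H,T)$ ($H=\{H(x,i,k)\}$ $\{0,1\}$-valued, $T$ real) with: (1) $T\in(-\infty,0)$ a.s.; (2) a.s. finitely many $H(x,i,k)\ne0$; (3) a.s. $H(x,i,k)=0$ if $\Psi(x,i,k)<T$;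 (4) $H(x,i,k)$ is $\mathcal{F}^+(\Psi(x,i,k))$-measurable; (5) a.s., for all $t<T$ and $\xi,\xi'$, equality of $\mathrm{Perf}(\cdot,t,x,i,k)H(x,i,k)$ for all $(x,i,k)$ implies $\Phi(\xi,t,0^-,0)=\Phi(\xi',t,0^-,0)$. Its width is bounded by nonnegative integers $(a_-,a_+)$ if: (i) $H$ is measurable w.r.t. $\sigma(\mathcal{F}(x,i);-a_-\le x\le a_+,i\in\mathfrak{J})$; (ii) a.s., $H(x,i,k)=1$ implies $x+A_i\subset[-a_-,a_+]$; (iii) there is a map $\Theta$ on $\Omega\times\{0,1\}^{\mathbb{Z}\times\mathfrak{J}\times\{1,2,\dots\}}$ with values in $S$, measurable w.r.t. $\sigma(\mathcal{F}(x,i);-a_-\le x\le a_+)\otimes$(product $\sigma$-algebra), with $\Phi(\xi,t,0^-,0)=\Theta(\Psi,(\mathrm{Perf}(\xi,t,x,i,k)H(x,i,k))_{x,i,k})$ a.s. for all $t<T$, $\xi$. Finite width means bounded by some such pair. $\Lambda_H(\lambda)=\mathbb{E}[\sum_{x,i,k}(\#A_i)e^{-\lambda\Psi(x,i,k)}H(x,i,k)]$. *)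

(* Defs.v *)
From HB Require Import structures.
From mathcomp Require Import all_boot all_order all_algebra.
From mathcomp Require Import all_classical all_reals all_analysis.
From mathcomp Require Import measurable_realfun.
Set Implicit Arguments. Unset Strict Implicit. Unset Printing Implicit Defensive.
Import Order.TTheory GRing.Theory Num.Theory.
Local Open Scope classical_set_scope.
Local Open Scope ring_scope.

(* CONVENTION: the nat index k stands for
   the paper's k+1, i.e. Psi w x i 0 is the paper's Psi(x,i,1) (the latest
   point before time 0), Psi w x i 1 is Psi(x,i,2), etc. *)

(** Points of the Poisson processes, built from interarrival times E:
    Psi(x,i,k+1) = -(E(x,i,0)+...+E(x,i,k)); if r_i = 0 the process has
    no points, encoded by all "points" being at -oo (they never lie in any
    interval [u,0), u real). *)
Definition psi_of {Omega : Type} {R : realType} {J : finType} (r : J -> R)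
  (E : Omega -> int -> J -> nat -> R) (w : Omega) (x : int) (i : J) (k : nat)
  : \bar R :=
  if 0 < r i then ((- \sum_(j < k.+1) E w x i j)%R)%:E else -oo%E.

Definition mutually_independent {d} {Omega : measurableType d} {R : realType}
  {J : finType} (P : probability Omega R) (E : Omega -> int -> J -> nat -> R) :=
  forall (l : seq (int * J * nat)) (B : int * J * nat -> set R),
    uniq l -> (forall p, measurable (B p)) ->
    P [set w | forall p, p \in l -> B p (E w p.1.1 p.1.2 p.2)] =
    (\prod_(p <- l) P [set w | B p (E w p.1.1 p.1.2 p.2)])%E.

(** Psi is a family of independent Poisson processes on (-oo,0) with rates
    r_i: the gaps between consecutive points (going backwards from 0) are
    independent Exp(r_i) random variables. *)
Definition poisson_family {d} {Omega : measurableType d} {R : realType}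
  {J : finType} (P : probability Omega R) (r : J -> R)
  (Psi : Omega -> int -> J -> nat -> \bar R) :=
  exists E : Omega -> int -> J -> nat -> R,
    [/\ (forall x i k, measurable_fun setT (fun w => E w x i k)),
        (forall x i k, 0 < r i -> forall B : set R, measurable B ->
            P [set w | B (E w x i k)] = exponential_prob (r i) B),
        mutually_independent P E &
        (forall w x i k, Psi w x i k = psi_of r E w x i k)].

(** A configuration on x + A_i
    is encoded as the list of its values in the order of the list A i. *)
Definition rule_ok {J : finType} {S : finType} (A : J -> seq int) (ell : J -> pred (seq S))
  (i : J) (x : int) (conf : int -> S) : bool :=
  (nilp (A i)) || ell i [seq conf (x + a) | a <- A i].

(** Graphical construction from xi at time u, for the realisation psi of
    the points.  perf x i k = whether the point psi x i k is performed;
    eta x t = the state of site x just before time t (for u < t <= 0). *)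
Definition graphical {R : realType} {J : finType} {S : finType} (A : J -> seq int)
  (ell : J -> pred (seq S)) (s : J -> S)
  (psi : int -> J -> nat -> \bar R) (xi : int -> S) (u : R)
  (perf : int -> J -> nat -> bool) (eta : int -> R -> S) : Prop :=
  (forall x i k, perf x i k =
      [&& (u%:E < psi x i k)%E, (psi x i k < 0%:E)%E &
          rule_ok A ell i x (fun y => eta y (fine (psi x i k)))]) /\
  (forall x (t : R), u < t <= 0 ->
     (exists i k, [/\ perf x i k, (u%:E < psi x i k < t%:E)%E,
                      eta x t = s i &
                      forall i' k', perf x i' k' ->
                        (u%:E < psi x i' k' < t%:E)%E ->
                        (psi x i' k' <= psi x i k)%E])
     \/ ((forall i k, perf x i k -> ~ (u%:E < psi x i k < t%:E)%E) /\
         eta x t = xi x)).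

(** Generating class of F^+(U): numbers of points of each Psi(x,i) in
    [U,0) and their positions. *)
Definition Fplus_gen {Omega : Type} {R : realType} {J : finType}
  (Psi : Omega -> int -> J -> nat -> \bar R) (U : Omega -> \bar R)
  : set (set Omega) :=
  [set Aset | exists x i k (B : set (\bar R)), measurable B /\
     Aset = [set w | (U w <= Psi w x i k)%E /\ B (Psi w x i k)]].

Definition Fplus {Omega : Type} {R : realType} {J : finType}
  (Psi : Omega -> int -> J -> nat -> \bar R) (U : Omega -> \bar R)
  : set (set Omega) := smallest (sigma_algebra setT) (Fplus_gen Psi U).

Definition Frange {Omega : Type} {R : realType} {J : finType}
  (Psi : Omega -> int -> J -> nat -> \bar R) (a b : nat) : set (set Omega) :=
  smallest (sigma_algebra setT)
    [set Aset | exists x i k (B : set (\bar R)),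
       [/\ - (a%:Z) <= x <= b%:Z, measurable B &
           Aset = [set w | B (Psi w x i k)]]].

Definition Ftheta {Omega : Type} {R : realType} {J : finType}
  (Psi : Omega -> int -> J -> nat -> \bar R) (a b : nat)
  : set (set (Omega * (int -> J -> nat -> bool))) :=
  smallest (sigma_algebra setT)
    ([set Z | exists Aset, Frange Psi a b Aset /\ Z = [set z | Aset z.1]] `|`
     [set Z | exists x i k, Z = [set z : Omega * (int -> J -> nat -> bool) | z.2 x i k]]).

Definition coupling_time {d} {Omega : measurableType d} {R : realType}
  {J S : finType} (P : probability Omega R) (A : J -> seq int)
  (ell : J -> pred (seq S)) (s : J -> S)
  (Psi : Omega -> int -> J -> nat -> \bar R)
  (H : Omega -> int -> J -> nat -> bool) (T : Omega -> R) : Prop :=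
  [/\ {ae P, forall w, T w < 0},
      {ae P, forall w, finite_set [set p : int * J * nat | H w p.1.1 p.1.2 p.2]},
      {ae P, forall w x i k, (Psi w x i k < (T w)%:E)%E -> H w x i k = false},
      (forall x i k, Fplus Psi (fun w => Psi w x i k) [set w | H w x i k]) &
      {ae P, forall w, forall (t : R) (xi xi' : int -> S)
          perf eta perf' eta', t < T w ->
          graphical A ell s (Psi w) xi t perf eta ->
          graphical A ell s (Psi w) xi' t perf' eta' ->
          (forall x i k, perf x i k && H w x i k = perf' x i k && H w x i k) ->
          eta 0 0 = eta' 0 0}].

Definition width_bounded {d} {Omega : measurableType d} {R : realType}
  {J S : finType} (P : probability Omega R) (A : J -> seq int)
  (ell : J -> pred (seq S)) (s : J -> S)
  (Psi : Omega -> int -> J -> nat -> \bar R)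
  (H : Omega -> int -> J -> nat -> bool) (T : Omega -> R) (a b : nat) : Prop :=
  [/\ (forall x i k, Frange Psi a b [set w | H w x i k]),
      {ae P, forall w x i k, H w x i k ->
          forall y, y \in A i -> - (a%:Z) <= x + y <= b%:Z} &
      exists Theta : Omega * (int -> J -> nat -> bool) -> S,
        (forall v : S, Ftheta Psi a b (Theta @^-1` [set v])) /\
        {ae P, forall w, forall (t : R) (xi : int -> S) perf eta, t < T w ->
            graphical A ell s (Psi w) xi t perf eta ->
            eta 0 0 = Theta (w, fun x i k => perf x i k && H w x i k)}].

Definition Lambda_H {d} {Omega : measurableType d} {R : realType}
  {J : finType} (P : probability Omega R) (A : J -> seq int)
  (Psi : Omega -> int -> J -> nat -> \bar R)
  (H : Omega -> int -> J -> nat -> bool) (lam : R) : \bar R :=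
  (\int[P]_w \esum_(p in [set: int * J * nat])
      (if H w p.1.1 p.1.2 p.2
       then (size (A p.1.2))%:R%:E * expeR ((- lam)%:E * Psi w p.1.1 p.1.2 p.2)
       else 0))%E.

Definition Lambda_T {d} {Omega : measurableType d} {R : realType}
  (P : probability Omega R) (T : Omega -> R) (lam : R) : \bar R :=
  (\int[P]_w (expR (- lam * T w))%:E)%E.

(* Main.v *)
Require Import Defs.
From HB Require Import structures.
From mathcomp Require Import all_boot all_order all_algebra.
From mathcomp Require Import all_classical all_reals all_analysis.
From mathcomp Require Import measurable_realfun.
From mathcomp Require Import ring lra zify.
Import Order.TTheory GRing.Theory Num.Theory.
Import HBNNSimple.
Local Open Scope classical_set_scope.
Local Open Scope ring_scope.


Lemma geo_fin (R : realType) (u : nat -> \bar R) (C q : R) : 0 <= q < 1 ->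
  (forall k, (0 <= u k)%E) -> (forall k, (u k <= (C * q ^+ k)%:E)%E) ->
  (\sum_(k <oo) u k < +oo)%E.
Proof.
move=> /andP[q0 q1] u0 uC.
apply: (le_lt_trans (lee_nneseries _ _)); first by move=> i _ _; exact: u0.
  by move=> n _; exact: uC.
have cv := @cvg_geometric_series R C q.
have hq : `|q| < 1 by rewrite ger0_norm.
have E : (fun n => (\sum_(0 <= k < n) (C * q ^+ k)%:E)%E) = EFin \o series (geometric C q).
  by apply/funext => n /=; rewrite sumEFin /series /=; congr EFin.
rewrite /= E EFin_lim; first by rewrite ltry.
exact: is_cvg_geometric_series.
Qed.


Lemma le_int_ae d (Omega : measurableType d) (R : realType)
  (P : {measure set Omega -> \bar R}) (f g : Omega -> \bar R) (N : set Omega) :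
  measurable N -> P N = 0%E -> (forall w, (0 <= f w)%E) -> (forall w, (0 <= g w)%E) ->
  measurable_fun setT g -> (forall w, ~ N w -> (f w <= g w)%E) ->
  (\int[P]_w f w <= \int[P]_w g w)%E.
Proof.
move=> mN PN f0 g0 mg fg.
rewrite {1}/integral -[X in (_ <= X)%E]sube0; apply: leeB; last first.
  by apply: ereal_sup_ubound; exists nnsfun0 => //; [move=> x; exact: funeneg_ge0 | exact: sintegral0].
apply: ge_ereal_sup => _ [h hf <-].
rewrite -[h in sintegral _ h](patch_setT (fun=> 0%R)) -integral_nnsfun//.
apply: ae_ge0_le_integral => //.
- by move=> x _; rewrite lee_fin.
- by apply/measurable_EFinP; exact: measurable_funP.
- exists N; split => // w /=; apply: contra_notP => Nw _.
  apply: le_trans (hf w) _; rewrite patch_setT (@ge0_funeposE _ _ setT)//; last by rewrite inE.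
  exact: fg.
Qed.


Lemma expo_neg (R : realType) (r : R) : exponential_prob r `]-oo, 0[ = 0%E.
Proof.
rewrite /exponential_prob integral0_eq// => x /=; rewrite in_itv/= => x0.
by rewrite lt0_exponential_pdf.
Qed.

Lemma expo_le (R : realType) (r δ : R) : 0 < r -> 0 < δ ->
  (exponential_prob r `]-oo, δ] <= (r * δ)%:E)%E.
Proof.
move=> r0 d0.
have -> : `]-oo, δ]%classic = `]-oo, 0[%classic `|` `[0, δ]%classic :> set R.
  apply/seteqP; split => x /=; rewrite !in_itv/=.
    by case: (ltP x 0) => [x0|x0] xd; [left|right; rewrite xd].
  by case=> [/ltW x0|/andP[_ ->//]]; apply: le_trans x0 _; exact: ltW.
rewrite /exponential_prob ge0_integral_setU//=; last 3 first.
- apply/measurable_EFinP; apply: measurable_funTS; exact: measurable_exponential_pdf.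
- by move=> x _; rewrite lee_fin exponential_pdf_ge0// ltW.
- rewrite disj_set2E; apply/eqP/seteqP; split => // x [/=]; rewrite !in_itv/=.
  by move=> x0 /andP[/(lt_le_trans x0)]; rewrite ltxx.
rewrite -/(exponential_prob r _) -/(exponential_prob r _) expo_neg add0e.
rewrite exponential_prob_itv0c// -EFinD lee_fin.
have := expR_ge1Dx (- r * δ); rewrite mulNr; lra.
Qed.


Lemma meas_forall_seq d (T : measurableType d) (I : eqType) (l : seq I)
  (Q : I -> set T) : (forall p, measurable (Q p)) ->
  measurable [set w | forall p, p \in l -> Q p w].
Proof.
move=> mQ; elim: l => [|a l IH].
  rewrite (_ : [set w | _] = setT); first exact: measurableT.
  by apply/seteqP; split => // w _ p; rewrite in_nil.
rewrite (_ : [set w | _] = Q a `&` [set w | forall p, p \in l -> Q p w]).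
  exact: measurableI.
apply/seteqP; split => w /=.
  by move=> H; split => [|p pl]; apply: H; rewrite in_cons ?eqxx ?pl ?orbT.
by move=> [Qa H] p; rewrite in_cons => /orP[/eqP->//|]; exact: H.
Qed.

Lemma measure_bigU_le d (T : measurableType d) (R : realType)
  (mu : {measure set T -> \bar R}) (I : Type) (s : seq I) (Q : pred I)
  (F : I -> set T) : (forall i, measurable (F i)) ->
  (mu (\big[setU/set0]_(i <- s | Q i) F i) <= \sum_(i <- s | Q i) mu (F i))%E.
Proof.
move=> mF; elim: s => [|a s IH]; first by rewrite !big_nil measure0.
rewrite !big_cons; case: (Q a) => //.
apply: le_trans (measureU2 _ _ _) _ => //.
  by apply: bigsetU_measurable => i _.
exact: leeD.
Qed.

Lemma prod_le (R : realType) (I : Type) (s : seq I) (F : I -> \bar R) (c : R) :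
  (forall i, (0 <= F i)%E) -> (forall i, (F i <= c%:E)%E) ->
  (\prod_(i <- s) F i <= (c ^+ size s)%:E)%E.
Proof.
move=> F0 Fc; elim: s => [|a s IH]; first by rewrite big_nil expr0.
rewrite big_cons /= exprS EFinM; apply: lee_pmul => //.
by apply: prode_ge0.
Qed.


Definition Iset {Omega : Type} {R : realType} {J : finType}
  (E : Omega -> int -> J -> nat -> R) (x : int) (i : J) (δ : R) {n : nat}
  (L : {set 'I_n}) : set Omega :=
  [set w | forall p, p \in [seq (x, i, nat_of_ord j) | j <- enum L] ->
     (fun _ : int * J * nat => `]-oo, δ]%classic) p (E w p.1.1 p.1.2 p.2)].

Definition Uset {Omega : Type} {R : realType} {J : finType}
  (E : Omega -> int -> J -> nat -> R) (x : int) (i : J) (δ : R) (n : nat) : set Omega :=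
  \big[setU/set0]_(L : {set 'I_n} | (n <= 2 * #|L|)%N) Iset E x i δ L.

Lemma meas_Iset d (Omega : measurableType d) (R : realType) (J : finType)
  (E : Omega -> int -> J -> nat -> R) x i δ n (L : {set 'I_n}) :
  (forall x i k, measurable_fun setT (fun w => E w x i k)) ->
  measurable (Iset E x i δ L :> set Omega).
Proof.
move=> mE; apply: (@meas_forall_seq _ _ _ _ (fun p => [set w | `]-oo, δ]%classic (E w p.1.1 p.1.2 p.2)])) => p.
by rewrite -[X in measurable X]setTI; apply: mE => //; exact: measurable_itv.
Qed.

Lemma meas_Uset d (Omega : measurableType d) (R : realType) (J : finType)
  (E : Omega -> int -> J -> nat -> R) x i δ n :
  (forall x i k, measurable_fun setT (fun w => E w x i k)) ->
  measurable (Uset E x i δ n :> set Omega).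
Proof.
by move=> mE; apply: bigsetU_measurable => L _; exact: meas_Iset.
Qed.

Lemma PU_bound d (Omega : measurableType d) (R : realType) (P : probability Omega R)
  (J : finType) (r : J -> R) (E : Omega -> int -> J -> nat -> R) x i (δ ρ : R) n :
  (forall x i k, measurable_fun setT (fun w => E w x i k)) ->
  (forall x i k, 0 < r i -> forall B : set R, measurable B ->
            P [set w | B (E w x i k)] = exponential_prob (r i) B) ->
  mutually_independent P E -> 0 < r i -> 0 < δ -> 0 <= ρ <= 1 -> r i * δ <= ρ ^+ 2 ->
  (P (Uset E x i δ n) <= ((2 * ρ) ^+ n)%:E)%E.
Proof.
move=> mE dE iE ri0 d0 /andP[rho0 rho1] rdr.
rewrite /Uset; apply: le_trans; first by apply: (@measure_bigU_le _ _ _ P _ _ _ (fun L => Iset E x i δ L)) => L; exact: meas_Iset.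
apply: (@le_trans _ _ (\sum_(L : {set 'I_n} | (n <= 2 * #|L|)%N) (ρ ^+ n)%:E)%E).
  apply: lee_sum => L HL.
  rewrite [X in (X <= _)%E](_ : _ = (\prod_(p <- [seq (x, i, nat_of_ord j) | j <- enum L]) P [set w | `]-oo, δ]%classic (E w p.1.1 p.1.2 p.2)])%E); last first.
    apply: iE; last by move=> p; exact: measurable_itv.
    by rewrite map_inj_uniq ?enum_uniq// => j1 j2 [] /val_inj.
  rewrite big_map.
  apply: le_trans (@prod_le _ _ _ (fun j : 'I_n => P [set w | `]-oo, δ]%classic (E w x i j)]) (r i * δ) _ _) _.
  - by move=> j; exact: measure_ge0.
  - move=> j /=; rewrite [X in (X <= _)%E](_ : _ = exponential_prob (r i) `]-oo, δ]%classic) ?expo_le//.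
    by apply: dE => //; exact: measurable_itv.
  rewrite lee_fin -cardE.
  apply: le_trans (_ : (ρ ^+ 2) ^+ #|L| <= _).
    by rewrite lerXn2r// ?nnegrE// mulr_ge0// ltW.
  rewrite -exprM; apply: ler_wiXn2l => //.
rewrite sumEFin lee_fin.
apply: (@le_trans _ _ (\sum_(L : {set 'I_n}) ρ ^+ n)).
  rewrite [leRHS](bigID (fun L : {set 'I_n} => (n <= 2 * #|L|)%N)) /= lerDl.
  by apply: sumr_ge0 => *; exact: exprn_ge0.
rewrite sumr_const -cardsT -powersetT card_powerset cardsT card_ord.
by rewrite exprMn -[in leLHS]mulr_natl natrX.
Qed.

Lemma in_U {Omega : Type} {R : realType} {J : finType}
  (E : Omega -> int -> J -> nat -> R) x i (δ : R) n w :
  0 < δ -> (forall j, (j < n)%N -> 0 <= E w x i j) ->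
  2 * \sum_(j < n) E w x i j <= δ * (n.-1)%:R -> Uset E x i δ n w.
Proof.
move=> d0 E0 HS.
set L := [set j : 'I_n | E w x i j <= δ]%SET.
have key : #|~: L|%:R * δ <= \sum_(j < n) E w x i j.
  rewrite (bigID (mem L)) /=.
  apply: le_trans (_ : \sum_(j | j \notin L) E w x i j <= _); last first.
    rewrite lerDr; apply: sumr_ge0 => j _; exact: E0.
  apply: le_trans (_ : \sum_(j | j \notin L) δ <= _).
    rewrite (eq_bigl (fun j => j \in (~: L)%SET)); last by move=> j; rewrite finset.in_setC.
    by rewrite sumr_const mulr_natl.
  apply: ler_sum => j; rewrite inE => /negP Hj; apply/ltW; rewrite ltNge; exact/negP.
have HL : (n <= 2 * #|L|)%N.
  have h1 : ((2 * #|(~: L)%SET|)%:R <= (n.-1)%:R :> R).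
    rewrite -(ler_pM2r d0) natrM.
    apply: (@le_trans _ _ (2 * \sum_(j < n) E w x i j)); last by rewrite [leRHS]mulrC.
    by rewrite -mulrA ler_pM2l.
  rewrite ler_nat in h1.
  have := cardsC L; rewrite card_ord; lia.
rewrite /Uset (bigD1 L) //=; left.
move=> p /mapP[j jL ->] /=; rewrite in_itv /=.
by move: jL; rewrite mem_enum inE.
Qed.


Lemma key_ineq (R : realType) (lam' mu lam β S τ ind : R) (k : nat) :
  0 <= mu -> lam' <= mu -> mu < lam -> 0 < β -> 0 <= S -> S <= τ ->
  (S <= β * k%:R -> ind = 1) -> 0 <= ind ->
  expR (lam' * S) <= expR (mu * β) ^+ k * ind + expR (- (lam - mu) * β) ^+ k * expR (lam * τ).
Proof.
move=> mu0 lmu mul b0 S0 St Hind ind0.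
have e1 : expR (lam' * S) <= expR (mu * τ).
  rewrite ler_expR; apply: le_trans (_ : mu * S <= _).
    by rewrite ler_wpM2r.
  by rewrite ler_wpM2l.
apply: le_trans e1 _.
rewrite -!expRM_natr.
case: (leP τ (β * k%:R)) => Ht.
  rewrite Hind; last exact: le_trans Ht.
  rewrite mulr1; apply: le_trans (_ : expR (mu * β * k%:R) <= _).
    by rewrite ler_expR -mulrA ler_wpM2l.
  by rewrite lerDl mulr_ge0 ?expR_ge0.
apply: le_trans (_ : expR (- (lam - mu) * β * k%:R) * expR (lam * τ) <= _); last first.
  by rewrite lerDr mulr_ge0 ?expR_ge0.
rewrite -expRD ler_expR.
have h : (lam - mu) * (β * k%:R) <= (lam - mu) * τ.
  by rewrite ler_wpM2l ?subr_ge0 ?ltW.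
nra.
Qed.

Lemma params (R : realType) (mu lam rs : R) : 0 <= mu -> mu < lam -> 0 <= rs ->
  exists β : R, [/\ 0 < β, 0 <= (4 * expR (mu * β))^-1 <= 1,
     rs * (2 * β) <= ((4 * expR (mu * β))^-1) ^+ 2 & expR (- (lam - mu) * β) < 1].
Proof.
move=> mu0 mul rs0.
set e := expR mu.
have e1 : 1 <= e by rewrite /e -expR0 ler_expR.
set K := 32 * rs * e ^+ 2.
have K0 : 0 <= K by rewrite /K !mulr_ge0 ?exprn_ge0 ?(le_trans ler01 e1).
exists (1 + K)^-1.
set β := (1 + K)^-1.
have b0 : 0 < β by rewrite invr_gt0; lra.
have b1 : β <= 1 by rewrite invf_le1; lra.
have bK : β * K <= 1.
  rewrite /β mulrC ler_pdivrMr; lra.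
set X := expR (mu * β).
have X1 : 1 <= X by rewrite /X -expR0 ler_expR mulr_ge0 // ltW.
have Xe : X <= e by rewrite /X /e ler_expR ler_piMr.
split => //.
- apply/andP; split; first by rewrite invr_ge0; lra.
  by rewrite invf_le1; lra.
- rewrite exprVn exprMn -[leRHS]mul1r ler_pdivlMr; last by apply: mulr_gt0; apply: exprn_gt0; lra.
  apply: le_trans bK; rewrite /K.
  have XX : X ^+ 2 <= e ^+ 2 by rewrite lerXn2r// nnegrE; lra.
  have rb : 0 <= rs * β by rewrite mulr_ge0 // ltW.
  nra.
- rewrite expR_lt1 mulNr oppr_lt0; apply: mulr_gt0 => //; lra.
Qed.


Theorem lemma4p13 (d : measure_display) (Omega : measurableType d)
  (R : realType) (P : probability Omega R) (J S : finType)
  (A : J -> seq int) (ell : J -> pred (seq S)) (s : J -> S) (r : J -> R)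
  (Psi : Omega -> int -> J -> nat -> \bar R)
  (H : Omega -> int -> J -> nat -> bool) (T : Omega -> R) (lam : R) :
  (forall i, uniq (A i)) ->
  (forall i, 0 <= r i) ->
  poisson_family P r Psi ->
  measurable_fun setT T ->
  coupling_time P A ell s Psi H T ->
  (exists a b : nat, width_bounded P A ell s Psi H T a b) ->
  0 < lam ->
  (Lambda_T P T lam < +oo)%E ->
  forall lam' : R, lam' < lam -> (Lambda_H P A Psi H lam' < +oo)%E.
Proof.
move=> uA r0 [E [mE dE iE PsiE]] mT [CT1 _ CT3 _ _] [a [b [_ W2 _]]] lam0 LT lam' ll.
have n1 : P.-negligible (~` [set w | T w < 0]) := CT1.
have n3 : P.-negligible (~` [set w | forall x i k, (Psi w x i k < (T w)%:E)%E -> H w x i k = false]) := CT3.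
have n2 : P.-negligible (~` [set w | forall x i k, H w x i k ->
          forall y, y \in A i -> - (a%:Z) <= x + y <= b%:Z]) := W2.
pose mu := Num.max lam' 0.
have mu0 : 0 <= mu by rewrite le_max lexx orbT.
have lmu : lam' <= mu by rewrite le_max lexx.
have mul : mu < lam by rewrite gt_max ll lam0.
pose rs := \sum_(j : J) r j.
have rs0 : 0 <= rs by apply: sumr_ge0 => j _.
have rle j : r j <= rs.
  by rewrite /rs (bigD1 j) //= lerDl sumr_ge0.
pose c := (\max_(j : J) size (A j))%N.
have cle j : (size (A j) <= c)%N by apply: leq_bigmax.
have := @params R mu lam rs mu0 mul rs0; case=> β [b0 rho01 rdr q21]; move/andP: rho01 => [rho0 rho1].
pose X := expR (mu * β).
pose ρ := (4 * X)^-1.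
pose δ := 2 * β.
have d0 : 0 < δ by rewrite mulr_gt0.
have rd j : r j * δ <= ρ ^+ 2.
  by apply: le_trans rdr; rewrite ler_wpM2r // ltW.
pose q2 := expR (- (lam - mu) * β).
pose q := Num.max 2^-1 q2.
have q0 : 0 <= q < 1.
  by rewrite le_max gt_max q21 invr_ge0 ler0n /= invf_lt1 ?ltr1n.
have X2 : X * (2 * ρ) = 2^-1.
  by rewrite /ρ /X invfM; field; rewrite gt_eqF// expR_gt0.
have LT0 : (0 <= Lambda_T P T lam)%E.
  by apply: integral_ge0 => w _; rewrite lee_fin expR_ge0.
pose Lt := fine (Lambda_T P T lam).
have LtE : Lambda_T P T lam = Lt%:E.
  by rewrite /Lt fineK // ge0_fin_numE.
have Lt0 : 0 <= Lt by rewrite -lee_fin -LtE.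
pose zs := [seq (m%:Z - a%:Z) | m <- iota 0 (a + b).+1].
pose sl := undup [seq xi <- [seq (z - head 0 (A j), j) | j <- enum J, z <- zs] | 0 < r xi.2].
have sl_r xi : xi \in sl -> 0 < r xi.2.
  by rewrite mem_undup mem_filter => /andP[].
have mem_sl x i : 0 < r i -> - (a%:Z) <= x + head 0 (A i) <= b%:Z -> (x, i) \in sl.
  move=> ri /andP[h1 h2]; rewrite mem_undup mem_filter; apply/andP; split; first exact: ri.
  apply/allpairsP; exists (i, x + head 0 (A i)); split => /=.
  - by rewrite mem_enum.
  - move: h1 h2; set z := x + head 0 (A i) => h1 h2.
    have za : 0 <= z + a%:Z by rewrite -lerBlDr sub0r.
    have zE : ((absz (z + a%:Z))%:Z = z + a%:Z) by rewrite abszE ger0_norm.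
    apply/mapP; exists (absz (z + a%:Z)); last by rewrite zE addrK.
    rewrite mem_iota add0n /= ltnS -(lez_nat) zE addnC PoszD lerD2r //.
  - by rewrite addrK.
pose Uk (xi : int * J) (k : nat) := Uset E xi.1 xi.2 δ k.+1.
pose h (xi : int * J) (k : nat) (w : Omega) :=
  ((c%:R) * (X ^+ k * \1_(Uk xi k) w + q2 ^+ k * expR (- lam * T w)))%:E.
pose g w := (\sum_(xi <- sl) \sum_(k <oo) h xi k w)%E.
pose NE := \bigcup_k \big[setU/set0]_(xi <- sl) [set w | E w xi.1 xi.2 k < 0].
have nE : P.-negligible NE.
  apply: negligible_bigcup => k; rewrite big_seq.
  apply: (big_ind (fun S => P.-negligible S)); [exact: negligible_set0 | exact: negligibleU|].
  move=> xi /sl_r rxi; exists [set w | E w xi.1 xi.2 k < 0]; split => //.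
    rewrite (_ : [set w | _] = setT `&` (fun w => E w xi.1 xi.2 k) @^-1` `]-oo, 0[%classic).
      by apply: mE => //; exact: measurable_itv.
    by apply/seteqP; split => w /=; rewrite in_itv /=; [move=> ->|case].
  rewrite (_ : [set w | E w xi.1 xi.2 k < 0] = [set w | `]-oo, 0[%classic (E w xi.1 xi.2 k)]); last first.
    by apply/seteqP; split => w /=; rewrite in_itv.
  rewrite [X in X = _](_ : _ = exponential_prob (r xi.2) `]-oo, 0[%classic); first exact: expo_neg.
  by apply: dE => //; exact: measurable_itv.
have h0 : forall xi k w, (0 <= h xi k w)%E.
  move=> xi k w.
  rewrite lee_fin; apply: mulr_ge0 => //; apply: addr_ge0; apply: mulr_ge0.
  - by apply: exprn_ge0; rewrite /X expR_ge0.
  - by rewrite indicE.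
  - by apply: exprn_ge0; rewrite /q2 expR_ge0.
  - exact: expR_ge0.
have mh : forall xi k, measurable_fun setT (h xi k).
  move=> xi k; apply/measurable_EFinP.
  apply: measurable_funM; first exact: measurable_cst.
  apply: measurable_funD; apply: measurable_funM; first exact: measurable_cst.
  - by apply: measurable_indic; apply: meas_Uset.
  - exact: measurable_cst.
  - apply: measurableT_comp; first exact: measurable_expR.
    by apply: measurable_funM => //; exact: measurable_cst.
have g0 : forall w, (0 <= g w)%E.
  move=> w.
  by apply: sume_ge0 => xi _; apply: nneseries_ge0 => k *; exact: h0.
case: (negligibleU (negligibleU (negligibleU n1 n3) n2) nE) => N [mN PN sN].
rewrite /Lambda_H.
apply: (le_lt_trans (@le_int_ae _ _ _ P _ g N mN PN _ _ _ _)).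
- move=> w; apply: esum_ge0 => p _; case: ifP => // _.
  by rewrite mule_ge0 // ?lee_fin // expeR_ge0.
- exact: g0.
- apply: emeasurable_sum => xi.
  have := @ge0_emeasurable_sum _ _ _ setT (h xi) xpredT (fun k x _ _ => h0 xi k x) (fun k _ => mh xi k).
  exact.
- move=> w Nw.
  have T0 : T w < 0.
    by apply: contra_notP Nw => hn; apply: sN; left; left; left.
  have H3 : forall x i k, (Psi w x i k < (T w)%:E)%E -> H w x i k = false.
    by apply: contra_notP Nw => hn; apply: sN; left; left; right.
  have H2 : forall x i k, H w x i k -> forall y, y \in A i -> - (a%:Z) <= x + y <= b%:Z.
    by apply: contra_notP Nw => hn; apply: sN; left; right.
  have HE : forall k xi, xi \in sl -> 0 <= E w xi.1 xi.2 k.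
    move=> k xi xis; apply: contra_notP Nw => hn; apply: sN; right; exists k => //.
    rewrite (big_rem xi) //=; left; rewrite ltNge; exact/negP.
  apply: (@le_trans _ _ (\esum_(p in [set: int * J * nat]) (if p.1 \in sl then h p.1 p.2 w else 0))%E).
    apply: le_esum => -[[x i] k] _ /=.
    case Hw: (H w x i k); last by case: ifP => // _; exact: h0.
    have ri : 0 < r i.
      rewrite ltNge; apply/negP => rn.
      have rF : (0 < r i) = false by rewrite ltNge rn.
      have := H3 x i k; rewrite PsiE /psi_of rF ltNye => /(_ isT).
      by rewrite Hw.
    case Ai: (A i) => [|y0 Ar].
      by rewrite /= mul0e; case: ifP => // _; exact: h0.
    have hy : head 0 (A i) \in A i by rewrite Ai mem_head.
    have hb := H2 x i k Hw (head 0 (A i)) hy.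
    rewrite (mem_sl x i ri hb) -Ai.
    set Sk := \sum_(j < k.+1) E w x i j.
    have S0 : 0 <= Sk by apply: sumr_ge0 => j _; exact: (HE j (x, i) (mem_sl x i ri hb)).
    have ST : Sk <= - T w.
      rewrite lerNr leNgt; apply/negP => hlt.
      have := H3 x i k; rewrite PsiE /psi_of ri lte_fin hlt => /(_ isT).
      by rewrite Hw.
    rewrite PsiE /psi_of ri -/Sk -EFinM /= lee_fin.
    apply: ler_pM; [by []|exact: expR_ge0|by rewrite ler_nat|].
    rewrite mulrNN (_ : - lam * T w = lam * - T w); last by rewrite mulrN mulNr.
    apply: (@key_ineq R lam' mu lam β Sk (- T w) _ k mu0 lmu mul b0 S0 ST); last by rewrite indicE.
    move=> Sb; rewrite indicE mem_set //; apply: in_U => //.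
      by move=> j _; exact: (HE j (x, i) (mem_sl x i ri hb)).
    rewrite /δ -mulrA ler_pM2l //=; lra.
  rewrite /g.
  have -> : [set: int * J * nat] = [set: int * J] `*`` (fun _ => [set: nat]).
    by apply/seteqP; split.
  rewrite -(@esum_esum _ _ _ [set: int * J] (fun _ => [set: nat]) (fun xi k => if xi \in sl then h xi k w else 0%E)); last first.
    by move=> xi k _ _; case: ifP => // _; exact: h0.
  rewrite (eq_esum (b := fun xi => if xi \in [set` sl] then (\sum_(k <oo) h xi k w)%E else 0%E)); last first.
    move=> xi _; rewrite mem_setE; case: ifP => _.
      by rewrite nneseries_esumT //; exact: h0.
    by rewrite esum1.
  rewrite -esum_mkcond esum_fset; last 2 first.
  - exact: finite_seq.
  - by move=> xi _; apply: nneseries_ge0 => *; exact: h0.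
  by rewrite -fsbig_seq // undup_uniq.
rewrite /g ge0_integral_sum //; last first.
  - by move=> xi w _; apply: nneseries_ge0 => k *; exact: h0.
  - move=> xi.
    have := @ge0_emeasurable_sum _ _ _ setT (h xi) xpredT (fun k x _ _ => h0 xi k x) (fun k _ => mh xi k).
    exact.
rewrite big_seq; apply: lte_sum_pinfty => xi /sl_r rxi.
rewrite integral_nneseries; [|by []|by move=> k; exact: mh|by move=> k w _; exact: h0].
apply: (@geo_fin _ (fun k => \int[P]_w h xi k w)%E (c%:R * (2 * ρ + Lt)) q q0).
  by move=> k; apply: integral_ge0 => w _; exact: h0.
move=> k.
rewrite (eq_integral (fun w => (c%:R * X ^+ k)%:E * (\1_(Uk xi k) w)%:E + (c%:R * q2 ^+ k)%:E * (expR (- lam * T w))%:E)%E); last first.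
  by move=> w _; rewrite /h -!EFinM -EFinD mulrDr !mulrA.
have cX : 0 <= c%:R * X ^+ k by rewrite mulr_ge0 // exprn_ge0 // /X expR_ge0.
have cq : 0 <= c%:R * q2 ^+ k by rewrite mulr_ge0 // exprn_ge0 // /q2 expR_ge0.
have mU : measurable (Uk xi k) by apply: meas_Uset.
have mI : measurable_fun setT (fun w => (\1_(Uk xi k) w)%:E : \bar R).
  by apply/measurable_EFinP; exact: measurable_indic.
have mT' : measurable_fun setT (fun w => (expR (- lam * T w))%:E : \bar R).
  apply/measurable_EFinP; apply: measurableT_comp; first exact: measurable_expR.
  by apply: measurable_funM => //; exact: measurable_cst.
rewrite ge0_integralD //; last 4 first.
- by move=> w _; rewrite -EFinM lee_fin mulr_ge0 // indicE.
- exact: measurable_funeM.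
- by move=> w _; rewrite -EFinM lee_fin mulr_ge0 // expR_ge0.
- exact: measurable_funeM.
rewrite !ge0_integralZl_EFin //.
rewrite integral_indic // setIT -/(Lambda_T P T lam) LtE.
apply: (@le_trans _ _ ((c%:R * X ^+ k)%:E * ((2 * ρ) ^+ k.+1)%:E + (c%:R * q2 ^+ k)%:E * Lt%:E)%E).
  apply: leeD => //; apply: lee_pmul; [by rewrite lee_fin|exact: measure_ge0|by []|].
  apply: (@PU_bound _ _ _ P _ r E xi.1 xi.2 δ ρ k.+1 mE dE iE rxi d0 _ (rd xi.2)).
  by rewrite rho0 rho1.
rewrite -!EFinM -EFinD lee_fin.
have r2 : 0 <= 2 * ρ by rewrite mulr_ge0.
have e1 : X ^+ k * (2 * ρ) ^+ k.+1 <= 2 * ρ * q ^+ k.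
  rewrite exprS mulrCA -exprMn X2; apply: ler_wpM2l => //.
  rewrite lerXn2r // ?nnegrE ?invr_ge0 // ?le_max ?lexx //.
  by apply/orP; left; rewrite invr_ge0 ler0n.
have e2 : q2 ^+ k <= q ^+ k.
  have q20 : 0 <= q2 by rewrite /q2 expR_ge0.
  by rewrite lerXn2r // ?nnegrE ?le_max ?lexx ?orbT // q20 orbT.
have c0 : 0 <= c%:R :> R by [].
have f1 : c%:R * (X ^+ k * (2 * ρ) ^+ k.+1) <= c%:R * (2 * ρ * q ^+ k) by rewrite ler_wpM2l.
have f2 : c%:R * (q2 ^+ k * Lt) <= c%:R * (q ^+ k * Lt) by rewrite ler_wpM2l // ler_wpM2r.
rewrite !mulrA in f1 f2; nra.
Qed.
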